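(* (i) For every integer $k\ge 1$, the vector $(2,4,k,1)$ is not 0-realizable. (ii) The vector $(2,5,2,1)$ is not 0-realizable.
   Context: All graphs are finite, nonempty, and reflexive (every vertex has a loop). $N[v]$ is the closed neighborhood of $v$ (including $v$). For distinct $v,w$, $w$ strictly corners $v$ if $N[v]\subsetneq N[w]$; $v$ is then a strict corner. A vertex dominates a set if adjacent to all its vertices. Corner ranking: set $G^{(1)}=G$, $k=1$. If $G^{(k)}$ is a clique, give all its vertices rank $k$ and stop. Else if $G^{(k)}$ has no strict corners, give all its vertices rank $\infty$ and stop. Else give every strict corner of $G^{(k)}$ rank $k$, delete them to get $G^{(k+1)}$ (induced subgraph), increase $k$ and repeat. The corner rank of $G$ is the largest rank of a vertex; $X_k$ is the set of rank-$k$ vertices. A graph is cop-win iff its corner rank is finite. A graph of finite corner rank $\alpha\ge2$ is of type 1 if some (equivalently every) vertex of rank $\alpha$ dominates $V(G^{(\alpha-1)})$, and of type 0 otherwise. The rank cardinality vector is $(x_\alpha,\dots,x_1)$ with $x_k=|X_k|$. A vector (finite list of positive integers) is 0-realizable if it is the rank cardinality vector of some cop-win graph of type 0. *)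

(* Defs.v *)
From mathcomp Require Import all_boot.
Set Implicit Arguments. Unset Strict Implicit. Unset Printing Implicit Defensive.

(* A graph is a finite type T with an adjacency relation adj : rel T which is
   symmetric and reflexive (every vertex has a loop); nonemptiness is 0 < #|T|.
   Subgraphs G^(k) are induced subgraphs given by vertex sets S : {set T}. *)
Section CornerRanking.
Variables (T : finType) (adj : rel T).

Definition nbhd (S : {set T}) (v : T) : {set T} := [set w in S | adj v w].

Definition is_clique (S : {set T}) : bool :=
  [forall x in S, forall y in S, adj x y].

Definition strictly_corners (S : {set T}) (w v : T) : bool :=
  [&& w \in S, v \in S, w != v & nbhd S v \proper nbhd S w].

Definition strict_corners (S : {set T}) : {set T} :=
  [set v in S | [exists w, strictly_corners S w v]].

(* gseq k = V(G^(k+1)).  Once G^(k) is a clique or has no strict corner,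
   no vertex is removed any more (a clique has no strict corner). *)
Fixpoint gseq (k : nat) : {set T} :=
  if k is k'.+1 then gseq k' :\: strict_corners (gseq k') else [set: T].

(* the corner rank is finite and equals a: G^(a) is a clique and a is least *)
Definition corner_rank_is (a : nat) : Prop :=
  0 < a /\ is_clique (gseq a.-1) /\ forall j, j < a.-1 -> ~~ is_clique (gseq j).

(* X_j : vertices of rank j (1 <= j <= a), for corner rank a *)
Definition rank_class (a j : nat) : {set T} :=
  if j == a then gseq a.-1 else strict_corners (gseq j.-1).

Definition dominates (v : T) (S : {set T}) : bool := [forall x in S, adj v x].

(* type 0 (for corner rank a >= 2): no vertex of rank a dominates V(G^(a-1)) *)
Definition type0 (a : nat) : bool :=
  ~~ [exists v in rank_class a a, dominates v (gseq a.-2)].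

(* rank cardinality vector (x_a, ..., x_1) *)
Definition rank_card_vector (a : nat) : seq nat :=
  [seq #|rank_class a j| | j <- rev (iota 1 a)].

End CornerRanking.

(* s is 0-realizable: it is the rank cardinality vector of some cop-win graph
   of type 0 (type is only defined for corner rank >= 2). *)
Definition zero_realizable (s : seq nat) : Prop :=
  exists (T : finType) (adj : rel T) (a : nat),
    [/\ reflexive adj, symmetric adj & 0 < #|T|] /\
    [/\ corner_rank_is adj a, 2 <= a, type0 adj a &
        rank_card_vector adj a = s].

(* Main.v *)
Require Import Defs.
From mathcomp Require Import all_boot.
From mathcomp Require Import zify.
Set Implicit Arguments. Unset Strict Implicit. Unset Printing Implicit Defensive.

Section Main.
Variables (T : finType) (adj : rel T).
Hypothesis Hrefl : reflexive adj.
Hypothesis Hsym : symmetric adj.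

Lemma inN (S : {set T}) x y : (y \in nbhd adj S x) = (y \in S) && adj x y.
Proof. by rewrite inE. Qed.

Lemma cornerP (S : {set T}) v : reflect (v \in S /\ exists2 w, w \in S & nbhd adj S v \proper nbhd adj S w)
  (v \in strict_corners adj S).
Proof.
rewrite inE; apply: (iffP andP) => [[vS /existsP[w /and4P[wS _ _ pr]]]|[vS [w wS pr]]].
  by split => //; exists w.
split => //; apply/existsP; exists w; apply/and4P; split => //.
by apply/eqP => ewv; move: pr; rewrite ewv properxx.
Qed.

Arguments cornerP {S v}.

Lemma corners_sub (S : {set T}) : strict_corners adj S \subset S.
Proof. by apply/subsetP => v /cornerP[]. Qed.

Lemma maxdom (S : {set T}) v w : w \in S -> nbhd adj S v \proper nbhd adj S w ->
  exists2 w', w' \in S :\: strict_corners adj S & nbhd adj S v \proper nbhd adj S w'.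
Proof.
move=> wS pr.
have: #|S| - #|nbhd adj S w| <= #|S| by apply: leq_subr.
move: {2}#|S| => n; elim: n w wS pr => [|n IH] w wS pr le;
  (case wc: (w \in strict_corners adj S); last by exists w => //; rewrite inE wc);
  move/cornerP: wc => [_ [z zS prz]];
  have h1 := proper_card prz;
  (have h2 : #|nbhd adj S z| <= #|S| by apply: subset_leq_card; apply/subsetP => y; rewrite inN => /andP[]);
  (have h3 : #|nbhd adj S w| <= #|S| by apply: subset_leq_card; apply/subsetP => y; rewrite inN => /andP[]).
  exfalso; lia.
apply: (IH z zS (proper_trans pr prz)); lia.
Qed.

Lemma sub_adj (S : {set T}) x c y : nbhd adj S x \subset nbhd adj S c -> y \in S -> adj x y -> adj c y.
Proof. by move=> /subsetP sub yS axy; have := sub y; rewrite !inN yS axy => /(_ isT). Qed.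

Lemma sub_self (S : {set T}) x c : nbhd adj S x \subset nbhd adj S c -> x \in S -> adj c x.
Proof. by move=> sub xS; apply: sub_adj sub xS (Hrefl x). Qed.

Lemma proper_elt (S : {set T}) p q : nbhd adj S p \proper nbhd adj S q ->
  exists e, [/\ e \in S, adj q e & ~~ adj p e].
Proof.
move/properP=> [_ [e]]; rewrite !inN => /andP[eS aqe]; rewrite eS /= => npe.
by exists e.
Qed.

Lemma cover (A : {set T}) (s : seq T) : uniq s -> {subset s <= A} -> #|A| <= size s ->
  forall e, e \in A -> e \in s.
Proof.
move=> us sA le e eA; apply/negPn/negP => es.
have ues : uniq (e :: s) by rewrite /= es us.
have : #|e :: s| <= #|A|.
  by apply: subset_leq_card; apply/subsetP => y; rewrite inE => /orP[/eqP->|/sA].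
by rewrite (card_uniqP ues) /= ltnNge le.
Qed.

Local Notation S1 := (gseq adj 1).
Local Notation S2 := (gseq adj 2).
Local Notation S3 := (gseq adj 3).
Local Notation C0 := (strict_corners adj [set: T]).
Local Notation C1 := (strict_corners adj S1).
Local Notation C2 := (strict_corners adj S2).
Local Notation N2 := (nbhd adj S2).

Lemma gseqS k : gseq adj k.+1 = gseq adj k :\: strict_corners adj (gseq adj k).
Proof. by []. Qed.
Lemma gseq0 : gseq adj 0 = [set: T]. Proof. by []. Qed.

Lemma S21 y : y \in S2 -> y \in S1.
Proof. by rewrite gseqS inE => /andP[]. Qed.

Lemma hstar : #|C0| = 1 -> exists2 h, h \in S2 & forall u, u \in C1 -> adj h u.
Proof.
move=> /eqP/cards1P[v eC0].
have vC0 : v \in C0 by rewrite eC0 set11.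
have [_ [w0 _ prv]] := cornerP vC0.
have inS1 y : (y \in S1) = (y \notin C0) by rewrite gseqS inE gseq0 in_setT andbT.
have w0S1 : w0 \in S1.
  by rewrite inS1 eC0 inE; apply/eqP => e; move: prv; rewrite e properxx.
have avu u : u \in C1 -> adj v u.
  move=> uC1; apply/negPn/negP => nvu.
  have uS1 : u \in S1 := subsetP (corners_sub _) u uC1.
  have [_ [w wS1 pr]] := cornerP uC1.
  have : u \in C0.
    apply/cornerP; split; first by rewrite inE.
    exists w; first by rewrite inE.
    apply/properP; split.
      apply/subsetP => y; rewrite !inN !in_setT /= => auy.
      have yS1 : y \in S1.
        by rewrite inS1 eC0 inE; apply/eqP => e; move: nvu; rewrite -e Hsym auy.
      by have := subsetP (proper_sub pr) y; rewrite !inN yS1 auy => /(_ isT) /andP[].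
    have [e [eS1 awe nue]] := proper_elt pr.
    by exists e; move: nue; rewrite !inN !in_setT //= eS1.
  by move: uS1; rewrite inS1 => /negP.
have aw0u u : u \in C1 -> adj w0 u.
  by move=> uC1; have := subsetP (proper_sub prv) u; rewrite !inN !in_setT avu //= => /(_ isT).
case: (boolP (w0 \in S2)) => w0S2; first by exists w0.
have w0C1 : w0 \in C1 by move: w0S2; rewrite gseqS inE w0S1 andbT negbK.
have [_ [w wS1 pr]] := cornerP w0C1.
have [w1 w1S2 pr1] := maxdom wS1 pr.
exists w1 => // u uC1.
have uS1 : u \in S1 := subsetP (corners_sub _) u uC1.
case: (eqVneq u w0) => [->|neq]; first exact: sub_self (proper_sub pr1) w0S1.
exact: sub_adj (proper_sub pr1) uS1 (aw0u u uC1).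
Qed.

Lemma witness p q : p \in S2 -> q \in S2 -> N2 p \proper N2 q ->
  exists u w, [/\ u \in C1, adj u p, ~~ adj u q, w \in S2 &
     adj w u /\ (forall y, y \in S2 -> adj u y -> adj w y)].
Proof.
move=> pS qS pr.
have pnC1 : p \notin C1 by move: pS; rewrite gseqS inE => /andP[].
case: (boolP [exists u in C1, adj u p && ~~ adj u q]) => [/exists_inP[u uC1 /andP[aup nuq]]|nex].
  have uS1 : u \in S1 := subsetP (corners_sub _) u uC1.
  have [_ [w' w'S1 pr']] := cornerP uC1.
  have [w wS2 prw] := maxdom w'S1 pr'.
  exists u, w; split => //; split; first exact: sub_self (proper_sub prw) uS1.
  by move=> y yS auy; apply: sub_adj (proper_sub prw) (S21 yS) auy.
exfalso; move/negP: pnC1; apply; apply/cornerP; split; first exact: S21.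
exists q; first exact: S21.
apply/properP; split.
  apply/subsetP => y; rewrite !inN => /andP[yS1 apy]; rewrite yS1 /=.
  case: (boolP (y \in C1)) => yC1.
    move/exists_inPn: nex => /(_ y yC1).
    by rewrite Hsym apy /= negbK Hsym.
  have yS2 : y \in S2 by rewrite gseqS inE yC1 yS1.
  exact: sub_adj (proper_sub pr) yS2 apy.
have [e [eS aqe npe]] := proper_elt pr.
by exists e; rewrite !inN ?(S21 eS) //=.
Qed.

Lemma maxdom2 x : x \in C2 -> exists2 c, c \in S3 & N2 x \proper N2 c.
Proof.
move=> /cornerP[xS [w wS pr]].
by have [c cS prc] := maxdom wS pr; exists c.
Qed.

Lemma core (c1 c2 h : T) : S3 = [set c1; c2] -> is_clique adj S3 ->
  (forall c, c \in S3 -> ~~ dominates adj c S2) -> h \in C2 ->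
  (forall u, u \in C1 -> adj h u) -> N2 h \proper N2 c1 ->
  (#|C2| = 4 \/ (#|C2| = 5 /\ #|C1| = 2)) -> False.
Proof.
move=> eS3 cl nd hC2 Hh hc1 Hcard.
have inS3 e : e \in S3 -> e = c1 \/ e = c2.
  by rewrite eS3 !inE => /orP[/eqP|/eqP]; auto.
have c1S3 : c1 \in S3 by rewrite eS3 !inE eqxx.
have c2S3 : c2 \in S3 by rewrite eS3 !inE eqxx orbT.
have S32 e : e \in S3 -> e \in S2 by rewrite gseqS inE => /andP[].
have c1S2 := S32 _ c1S3.
have c2S2 := S32 _ c2S3.
have inS2 e : e \in S2 -> [\/ e = c1, e = c2 | e \in C2].
  move=> eS; case: (boolP (e \in C2)) => eC; first by constructor 3.
  have : e \in S3 by rewrite gseqS inE eC eS.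
  by case/inS3 => ->; [constructor 1|constructor 2].
have a12 : adj c1 c2.
  by move/forallP: cl => /(_ c1) /implyP /(_ c1S3) /forallP /(_ c2) /implyP /(_ c2S3).
have md x : x \in C2 -> N2 x \proper N2 c1 \/ N2 x \proper N2 c2.
  by move=> /maxdom2[c /inS3[]->]; auto.
have nd' c : c \in S3 -> exists2 e, e \in S2 & ~~ adj c e.
  move=> cS; have := nd c cS; rewrite /dominates negb_forall => /existsP[e].
  by rewrite negb_imply => /andP[eS ne]; exists e.
have wit p q : p \in S2 -> q \in S2 -> N2 p \proper N2 q ->
  exists u w, [/\ u \in C1, adj u p, ~~ adj u q, w \in S2 &
     [/\ adj w u, adj w p, adj w h & forall y, y \in S2 -> adj u y -> adj w y]].
  move=> pS qS pr; have [u [w [uC1 aup nuq wS [awu dom]]]] := witness pS qS pr.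
  have hS : h \in S2 := subsetP (corners_sub _) h hC2.
  exists u, w; split => //; split => //; first exact: dom aup.
  by apply: dom hS _; rewrite Hsym; apply: Hh.
have hS2 : h \in S2 := subsetP (corners_sub _) h hC2.
have ac1h : adj c1 h := sub_self (proper_sub hc1) hS2.
have [x xS nc1x] := nd' c1 c1S3.
have xC2 : x \in C2.
  case: (inS2 x xS) => // ex; move: nc1x; rewrite ex ?Hrefl ?a12 //.
have xc2 : N2 x \proper N2 c2.
  case: (md x xC2) => // pr; move: nc1x; rewrite (sub_self (proper_sub pr) xS) //.
have [u [w [uC1 aux nuc2 wS2 [awu awx awh domu]]]] := wit x c2 xS c2S2 xc2.
have ac1w : adj c1 w by apply: sub_adj (proper_sub hc1) wS2 _; rewrite Hsym.
have ac2w : adj c2 w by apply: sub_adj (proper_sub xc2) wS2 _; rewrite Hsym.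
have nhx : ~~ adj h x.
  by apply/negP => ahx; move: nc1x; rewrite (sub_adj (proper_sub hc1) xS ahx).
have wC2 : w \in C2.
  case: (inS2 w wS2) => // ew; [move: nc1x; rewrite -ew awx // | move: nuc2; rewrite -ew Hsym awu //].
have wc2 : N2 w \proper N2 c2.
  case: (md w wC2) => // pr; move: nc1x; rewrite (sub_adj (proper_sub pr) xS awx) //.
have ac2h : adj c2 h := sub_adj (proper_sub wc2) hS2 awh.
have ac2x : adj c2 x := sub_self (proper_sub xc2) xS.
have [z zS nc2z] := nd' c2 c2S3.
have zC2 : z \in C2.
  case: (inS2 z zS) => // ez; move: nc2z; rewrite ez ?Hrefl // Hsym a12 //.
have zc1 : N2 z \proper N2 c1.
  case: (md z zC2) => // pr; move: nc2z; rewrite (sub_self (proper_sub pr) zS) //.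
have [u2 [w2 [u2C1 au2z nu2c1 w2S2 [aw2u2 aw2z aw2h domu2]]]] := wit z c1 zS c1S2 zc1.
have ac1w2 : adj c1 w2 by apply: sub_adj (proper_sub zc1) w2S2 _; rewrite Hsym.
have nwz : ~~ adj w z.
  by apply/negP => awz; move: nc2z; rewrite (sub_adj (proper_sub wc2) zS awz).
have hx : h != x by apply/eqP => e; move: nc1x; rewrite -e ac1h.
have wx : w != x by apply/eqP => e; move: nc1x; rewrite -e ac1w.
have wh : w != h by apply/eqP => e; move: nhx; rewrite -e awx.
have zh : z != h by apply/eqP => e; move: nc2z; rewrite e ac2h.
have zx : z != x by apply/eqP => e; move: nc2z; rewrite e ac2x.
have zw : z != w by apply/eqP => e; move: nc2z; rewrite e ac2w.
have w2c1 : w2 != c1 by apply/eqP => e; move: nu2c1; rewrite -e Hsym aw2u2.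
have w2c2 : w2 != c2 by apply/eqP => e; move: nc2z; rewrite -e aw2z.
case: Hcard => [H4|[H5 HC1]].
  have cov' e : e \in C2 -> [\/ e = h, e = x, e = w | e = z].
    move=> eC; have : e \in [:: h; x; w; z].
      apply: (@cover C2 [:: h; x; w; z] _ _ _ e eC).
      - by rewrite /= !inE !negb_or hx (eq_sym h w) wh (eq_sym h z) zh (eq_sym x w) wx (eq_sym x z) zx (eq_sym w z) zw.
      - by move=> y; rewrite !in_cons in_nil orbF => /or4P[] /eqP->.
      - by rewrite H4.
    by rewrite !inE => /or4P[] /eqP ->; [constructor 1|constructor 2|constructor 3|constructor 4].
  have ahz : adj h z.
    case: (inS2 w2 w2S2) => [e|e|w2C].
    - by move: w2c1; rewrite e eqxx.
    - by move: w2c2; rewrite e eqxx.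
    case: (cov' w2 w2C) => e; rewrite e in aw2z aw2h ac1w2.
    - by [].
    - by rewrite ac1w2 in nc1x.
    - by rewrite aw2z in nwz.
    - by rewrite Hsym.
  have [e [eS ac1e nhe]] := proper_elt hc1.
  case: (inS2 e eS) => [ee|ee|eC].
  - by move: nhe; rewrite ee Hsym ac1h.
  - by move: nhe; rewrite ee Hsym ac2h.
  case: (cov' e eC) => ee; rewrite ee in ac1e nhe.
  - by rewrite Hrefl in nhe.
  - by rewrite ac1e in nc1x.
  - by rewrite Hsym awh in nhe.
  - by rewrite ahz in nhe.
have uu2 : u != u2 by apply/eqP => e; move: nwz; rewrite (domu z zS) // e.
have covU e : e \in C1 -> e = u \/ e = u2.
  move=> eC; have : e \in [:: u; u2].
    apply: (@cover C1 [:: u; u2] _ _ _ e eC).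
    - by rewrite /= inE uu2.
    - by move=> y; rewrite !in_cons in_nil orbF => /orP[] /eqP->.
    - by rewrite HC1.
  by rewrite !in_cons in_nil orbF => /orP[] /eqP ->; auto.
have [y yC2 ny] : exists2 y, y \in C2 & y \notin [:: h; x; w; z].
  apply/subsetPn/negP => sub.
  have le := subset_leq_card sub; rewrite H5 in le.
  by have := leq_trans le (card_size [:: h; x; w; z]).
move: ny; rewrite !in_cons in_nil orbF !negb_or => /and4P[yh yx yw yz].
have yS2 : y \in S2 := subsetP (corners_sub _) y yC2.
have cov' e : e \in C2 -> e = h \/ e = x \/ e = w \/ e = z \/ e = y.
  move=> eC; have : e \in [:: h; x; w; z; y].
    apply: (@cover C2 [:: h; x; w; z; y] _ _ _ e eC).
    - by rewrite /= !inE !negb_or hx (eq_sym h w) wh (eq_sym h z) zh (eq_sym h y) yh (eq_sym x w) wx (eq_sym x z) zx (eq_sym x y) yx (eq_sym w z) zw (eq_sym w y) yw (eq_sym z y) yz.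
    - by move=> e'; rewrite !in_cons in_nil orbF => /orP[/eqP->|/orP[/eqP->|/orP[/eqP->|/orP[/eqP->|/eqP->]]]].
    - by rewrite H5.
  by rewrite !in_cons in_nil orbF => /orP[/eqP->|/orP[/eqP->|/orP[/eqP->|/orP[/eqP->|/eqP->]]]]; auto.
have nwy : ~~ adj w y.
  have [e [eS ac2e nwe]] := proper_elt wc2.
  case: (inS2 e eS) => [ee|ee|eC].
  - by rewrite ee Hsym ac1w in nwe.
  - by rewrite ee Hsym ac2w in nwe.
  case: (cov' e eC) => [ee|[ee|[ee|[ee|ee]]]]; rewrite ee in ac2e nwe.
  - by rewrite awh in nwe.
  - by rewrite awx in nwe.
  - by rewrite Hrefl in nwe.
  - by rewrite ac2e in nc2z.
  - by [].
have nw2x : ~~ adj w2 x.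
  apply/negP => aw2x.
  case: (inS2 w2 w2S2) => [e|e|w2C]; first by rewrite e eqxx in w2c1.
    by rewrite e eqxx in w2c2.
  case: (md w2 w2C) => pr.
  - by rewrite (sub_adj (proper_sub pr) xS aw2x) in nc1x.
  - by rewrite (sub_adj (proper_sub pr) zS aw2z) in nc2z.
have nxy : ~~ adj x y.
  apply/negP => axy.
  have ayx : adj y x by rewrite Hsym.
  have yc2 : N2 y \proper N2 c2.
    case: (md y yC2) => // pr.
    by rewrite (sub_adj (proper_sub pr) xS ayx) in nc1x.
  have nyz : ~~ adj y z.
    by apply/negP => ayz; rewrite (sub_adj (proper_sub yc2) zS ayz) in nc2z.
  have [u3 [w3 [u3C1 au3y nu3c2 _ _]]] := wit y c2 yS2 c2S2 yc2.
  case: (covU u3 u3C1) => e; rewrite e in au3y.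
    by rewrite (domu y yS2 au3y) in nwy.
  have aw2y := domu2 y yS2 au3y.
  case: (inS2 w2 w2S2) => [ee|ee|w2C]; first by rewrite ee eqxx in w2c1.
    by rewrite ee eqxx in w2c2.
  case: (cov' w2 w2C) => [ee|[ee|[ee|[ee|ee]]]]; rewrite ee in aw2z aw2y ac1w2.
  - have [e' [e'S ac1e nhe]] := proper_elt hc1.
    case: (inS2 e' e'S) => [ee'|ee'|eC].
    + by move: nhe; rewrite ee' Hsym ac1h.
    + by move: nhe; rewrite ee' Hsym ac2h.
    case: (cov' e' eC) => [ee'|[ee'|[ee'|[ee'|ee']]]]; rewrite ee' in ac1e nhe.
    + by rewrite Hrefl in nhe.
    + by rewrite ac1e in nc1x.
    + by rewrite Hsym awh in nhe.
    + by rewrite aw2z in nhe.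
    + by rewrite aw2y in nhe.
  - by rewrite ac1w2 in nc1x.
  - by rewrite aw2z in nwz.
  - by rewrite Hsym aw2y in nyz.
  - by rewrite aw2z in nyz.
have prxw : N2 x \proper N2 w.
  apply/properP; split.
    apply/subsetP => e; rewrite !inN => /andP[eS axe]; rewrite eS /=.
    case: (inS2 e eS) => [ee|ee|eC].
    - by rewrite ee Hsym in axe; rewrite axe in nc1x.
    - by rewrite ee Hsym.
    case: (cov' e eC) => [ee|[ee|[ee|[ee|ee]]]]; rewrite ee in axe *.
    - by rewrite Hsym axe in nhx.
    - by [].
    - by rewrite Hrefl.
    - by rewrite (sub_adj (proper_sub xc2) zS axe) in nc2z.
    - by rewrite axe in nxy.
  by exists c1; rewrite !inN c1S2 /= Hsym.
have wS2' := wS2.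
have xS2 := xS.
have [u4 [w4 [u4C1 au4x nu4w _ _]]] := wit x w xS wS2 prxw.
case: (covU u4 u4C1) => e; rewrite e in au4x nu4w.
  by rewrite Hsym awu in nu4w.
by rewrite (domu2 x xS au4x) in nw2x.
Qed.

Lemma caseK (c1 c2 : T) : S3 = [set c1; c2] -> is_clique adj S3 ->
  (forall u, u \in C1 -> adj c1 u) -> dominates adj c2 S2.
Proof.
move=> eS3 cl Hh.
have c1S3 : c1 \in S3 by rewrite eS3 !inE eqxx.
have c2S3 : c2 \in S3 by rewrite eS3 !inE eqxx orbT.
apply/forallP => y; apply/implyP => yS.
case: (boolP (y \in C2)) => yC.
  have [c cS pr] := maxdom2 yC.
  move: cS; rewrite eS3 !inE => /orP[/eqP ec|/eqP ec]; rewrite ec in pr.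
    have S32 : c1 \in S2 by move: c1S3; rewrite gseqS inE => /andP[].
    have [u [w [uC1 _ nuc1 _ _]]] := witness yS S32 pr.
    by rewrite Hsym Hh in nuc1.
  exact: sub_self (proper_sub pr) yS.
have : y \in S3 by rewrite gseqS inE yC yS.
rewrite eS3 !inE => /orP[/eqP->|/eqP->]; last exact: Hrefl.
by move/forallP: cl => /(_ c2) /implyP /(_ c2S3) /forallP /(_ c1) /implyP /(_ c1S3).
Qed.

Lemma main_contra : #|C0| = 1 -> #|S3| = 2 -> is_clique adj S3 ->
  ~~ [exists v in S3, dominates adj v S2] ->
  (#|C2| = 4 \/ (#|C2| = 5 /\ #|C1| = 2)) -> False.
Proof.
move=> HC0 HK cl nex Hcard.
have [h hS Hh] := hstar HC0.
move/eqP/cards2P: HK => [a [b [ab eS3]]].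
have eS3' : S3 = [set b; a] by rewrite eS3 setUC.
have nd c : c \in S3 -> ~~ dominates adj c S2 by move/exists_inPn: nex; apply.
have aS3 : a \in S3 by rewrite eS3 !inE eqxx.
have bS3 : b \in S3 by rewrite eS3 !inE eqxx orbT.
case: (boolP (h \in C2)) => hC.
  have [c cS pr] := maxdom2 hC.
  move: cS; rewrite eS3 !inE => /orP[/eqP ec|/eqP ec]; rewrite ec in pr.
    exact: (core eS3 cl nd hC Hh pr Hcard).
  exact: (core eS3' cl nd hC Hh pr Hcard).
have : h \in S3 by rewrite gseqS inE hC hS.
rewrite eS3 !inE => /orP[/eqP eh|/eqP eh]; rewrite eh in Hh.
  by move: (nd b bS3); rewrite (caseK eS3 cl Hh).
by move: (nd a aS3); rewrite (caseK eS3' cl Hh).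
Qed.

End Main.

Lemma vec (T : finType) (adj : rel T) a x4 x3 x2 x1 :
  rank_card_vector adj a = [:: x4; x3; x2; x1] ->
  [/\ a = 4, #|gseq adj 3| = x4, #|strict_corners adj (gseq adj 2)| = x3,
      #|strict_corners adj (gseq adj 1)| = x2 & #|strict_corners adj [set: T]| = x1].
Proof.
move=> Hv; have := congr1 size Hv; rewrite size_map size_rev size_iota => a4.
subst a; move: Hv; rewrite /rank_card_vector /=.
by case=> e4 e3 e2 e1; split.
Qed.

Theorem theorem3p26 :
  (forall k : nat, 1 <= k -> ~ zero_realizable [:: 2; 4; k; 1]) /\
  ~ zero_realizable [:: 2; 5; 2; 1].
Proof.
split.
  move=> k _ [T [adj [a [[Hr Hs _] [Hcr _ Hty Hv]]]]].
  have [a4 e4 e3 _ e1] := vec Hv; subst a.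
  case: Hcr => _ [cl _].
  exact: (main_contra Hr Hs e1 e4 cl Hty (or_introl e3)).
move=> [T [adj [a [[Hr Hs _] [Hcr _ Hty Hv]]]]].
have [a4 e4 e3 e2 e1] := vec Hv; subst a.
case: Hcr => _ [cl _].
exact: (main_contra Hr Hs e1 e4 cl Hty (or_intror (conj e3 e2))).
Qed.
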